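(* Let $t\ge1$, $t\le k\le v$, $\lambda\ge1$ be integers and suppose there exists a $t$-$(v,k,\lambda)$ design whose number of blocks $b=\lambda\binom{v}{t}/\binom{k}{t}$ is divisible by $v$. Then there exists an authentication system with $k$ source states, $v$ messages and $b$ encoding rules which, when the source states are equiprobable and the encoding rules are used with equal probability, has perfect secrecy and is $(t-1)$-fold secure against spoofing in the verification oracle model. Moreover, the system is optimal (i.e. $b=\binom{v}{t}/\binom{k}{t}$) if and only if $\lambda=1$.
   Context: A $t$-$(v,k,\lambda)$ design is a pair $(X,\mathcal{B})$ where $X$ is a set of $v$ points and $\mathcal{B}$ is a collection of distinct $k$-subsets of $X$ (blocks) such that every $t$-subset of $X$ is contained in exactly $\lambda$ blocks; $b=|\mathcal{B}|$. Authentication system: finite sets $\mathcal{S}$ of $k$ source states, $\mathcal{M}$ of $v$ messages, $\mathcal{E}$ of $b$ encoding rules, each $e\in\mathcal{E}$ an injective map $\mathcal{S}\to\mathcal{M}$; $M(e)=\{e(s):s\in\mathcal{S}\}$ is the set of messages valid (accepted) under $e$. A key $e$ is drawn according to $p_E$, source states according to $p_S$, independently; ''equiprobable source states'' means independent and uniformly distributed source states. Perfect secrecy: $p_S(s\mid m)=p_S(s)$ for every source state $s$ and message $m$. Verification oracle (V-oracle) model: for a secret key $e$, the opponent may adaptively submit query messages $m$ to an oracle which answers ''accept'' if $m\in M(e)$ and ''reject'' otherwise. In an offline spoofing attack of order $i$, the opponent makes $i$ adaptive queries and then outputs a message distinct from all queried ones, succeeding if it lies in $M(e)$; $P^{\mathrm{offline}}_{d_i}$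 denotes the maximal success probability over strategies. In an online attack of order $i$, the opponent succeeds as soon as one of his $i+1$ distinct submitted messages is accepted; $P^{\mathrm{online}}_{d_i}$ is the maximal success probability. One always has $P^{\mathrm{offline}}_{d_i}\ge k/v$ and $P^{\mathrm{online}}_{d_i}\ge 1-\binom{v-k}{i+1}/\binom{v}{i+1}$, and equality in one is equivalent to equality in the other. The system is $t$-fold secure against spoofing in the V-oracle model if $P^{\mathrm{offline}}_{d_t}=k/v$ (equivalently $P^{\mathrm{online}}_{d_t}=1-\binom{v-k}{t+1}/\binom{v}{t+1}$). A $(t-1)$-fold secure system in this model has $b\ge\binom{v}{t}/\binom{k}{t}$; it is optimal if equality holds. *)

(* Defs.v *)
From HB Require Import structures.
From mathcomp Require Import all_boot all_order all_algebra.
Set Implicit Arguments. Unset Strict Implicit. Unset Printing Implicit Defensive.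
Import Order.TTheory GRing.Theory Num.Theory.

(* Blocks form a set of k-subsets (hence distinct); every t-subset lies in
   exactly lam blocks. *)
Definition is_design (v t k lam : nat) (D : {set {set 'I_v}}) : Prop :=
  (forall B, B \in D -> #|B| = k) /\
  (forall T : {set 'I_v}, #|T| = t -> #|[set B in D | T \subset B]| = lam).

(* Source states 'I_k, messages 'I_v, encoding rules 'I_b;
   enc e : 'I_k -> 'I_v is the encoding rule e. *)
Definition auth_system (k v b : nat) (enc : 'I_b -> 'I_k -> 'I_v) : Prop :=
  (forall e, injective (enc e)) /\
  (forall e1 e2, enc e1 =1 enc e2 -> e1 = e2).

Definition valid_msgs (k v b : nat) (enc : 'I_b -> 'I_k -> 'I_v) (e : 'I_b)
  : {set 'I_v} := [set enc e s | s : 'I_k].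

Local Open Scope ring_scope.

Definition unif (n : nat) : 'I_n -> rat := fun _ => (n%:R)^-1.

Definition pSM (k v b : nat) (enc : 'I_b -> 'I_k -> 'I_v)
  (pE : 'I_b -> rat) (pS : 'I_k -> rat) (s : 'I_k) (m : 'I_v) : rat :=
  \sum_(e | enc e s == m) pE e * pS s.

Definition pM (k v b : nat) (enc : 'I_b -> 'I_k -> 'I_v)
  (pE : 'I_b -> rat) (pS : 'I_k -> rat) (m : 'I_v) : rat :=
  \sum_(s : 'I_k) pSM enc pE pS s m.

(* perfect secrecy: p_S(s | m) = p_S(s) for every s and every message m
   (of positive probability, so that the conditional is defined) *)
Definition perfect_secrecy (k v b : nat) (enc : 'I_b -> 'I_k -> 'I_v)
  (pE : 'I_b -> rat) (pS : 'I_k -> rat) : Prop :=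
  forall (s : 'I_k) (m : 'I_v), 0 < pM enc pE pS m ->
    pSM enc pE pS s m / pM enc pE pS m = pS s.

(* A deterministic adaptive strategy maps the history of oracle answers so
   far (true = accept) to the next message to submit; after i answers it
   gives the final output message. *)
Definition strategy (v : nat) := seq bool -> 'I_v.

Fixpoint hist (k v b : nat) (enc : 'I_b -> 'I_k -> 'I_v) (st : strategy v)
  (e : 'I_b) (j : nat) : seq bool :=
  match j with
  | 0 => [::]
  | j'.+1 => let h := hist enc st e j' in rcons h (st h \in valid_msgs enc e)
  end.

Definition queries (k v b : nat) (enc : 'I_b -> 'I_k -> 'I_v) (st : strategy v)
  (i : nat) (e : 'I_b) : seq 'I_v :=
  [seq st (hist enc st e j) | j <- iota 0 i].

Definition output (k v b : nat) (enc : 'I_b -> 'I_k -> 'I_v) (st : strategy v)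
  (i : nat) (e : 'I_b) : 'I_v := st (hist enc st e i).

Definition valid_offline (k v b : nat) (enc : 'I_b -> 'I_k -> 'I_v)
  (st : strategy v) (i : nat) : Prop :=
  forall e, output enc st i e \notin queries enc st i e.

Definition succ_offline (k v b : nat) (enc : 'I_b -> 'I_k -> 'I_v)
  (pE : 'I_b -> rat) (st : strategy v) (i : nat) : rat :=
  \sum_(e | output enc st i e \in valid_msgs enc e) pE e.

Definition Poffline_eq (k v b : nat) (enc : 'I_b -> 'I_k -> 'I_v)
  (pE : 'I_b -> rat) (i : nat) (p : rat) : Prop :=
  (exists2 st, valid_offline enc st i & succ_offline enc pE st i = p) /\
  (forall st, valid_offline enc st i -> succ_offline enc pE st i <= p).

Definition fold_secure (k v b : nat) (enc : 'I_b -> 'I_k -> 'I_v)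
  (pE : 'I_b -> rat) (t : nat) : Prop :=
  Poffline_eq enc pE t (k%:R / v%:R).

Definition optimal (k v b : nat) (enc : 'I_b -> 'I_k -> 'I_v) (t : nat) : Prop :=
  (b%:R : rat) = 'C(v, t)%:R / 'C(k, t)%:R.

(* Main.v *)
Require Import Defs.
From HB Require Import structures.
From mathcomp Require Import all_boot all_order all_algebra.
From mathcomp Require Import fingroup perm zify ring.
Set Implicit Arguments. Unset Strict Implicit. Unset Printing Implicit Defensive.


Section Design.
Variables (v t k lam : nat) (D : {set {set 'I_v}}).
Hypotheses (Hdes : is_design t k lam D) (tk : t <= k) (kv : k <= v).

Definition SS (A R : {set 'I_v}) := [set B : {set 'I_v} | (B \in D) && ((A \subset B) && (R \subset ~: B))].

Lemma S_split x A R : #|SS A R| = #|SS (x |: A) R| + #|SS A (x |: R)|.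
Proof.
rewrite -(cardsID [set B : {set 'I_v} | x \in B] (SS A R)).
have -> : SS A R :&: [set B : {set 'I_v} | x \in B] = SS (x |: A) R.
  apply/setP => B; rewrite !inE subUset sub1set.
  by case: (x \in B); rewrite ?andbT ?andbF.
have -> : SS A R :\: [set B : {set 'I_v} | x \in B] = SS A (x |: R).
  apply/setP => B; rewrite !inE subUset sub1set !inE.
  by case: (x \in B); rewrite ?andbT ?andbF.
by [].
Qed.

Lemma sum_const_in (T : finType) (X : {set T}) (F : T -> nat) c :
  (forall x, x \in X -> F x = c) -> \sum_(x in X) F x = #|X| * c.
Proof. by move=> H; rewrite (eq_bigr (fun=> c)) // sum_nat_const. Qed.

Lemma card_sumb (T : finType) (P : pred T) : #|[set x | P x]| = \sum_x (P x : nat).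
Proof. by rewrite -sum1dep_card big_mkcond; apply: eq_bigr => x _; case: (P x). Qed.

Lemma blk_size (B : {set 'I_v}) : B \in D -> #|B| = k.
Proof. by case: Hdes => H _; apply: H. Qed.

Lemma dcS (A R : {set 'I_v}) : A \subset ~: R ->
  \sum_(x in ~: (A :|: R)) #|SS (x |: A) R| = (k - #|A|) * #|SS A R|.
Proof.
move=> AR.
have E x : #|SS (x |: A) R| = \sum_(B in SS A R) (x \in B : nat).
  rewrite big_mkcond /= {1}/SS card_sumb; apply: eq_bigr => B _.
  rewrite !inE subUset sub1set.
  by case: (x \in B); case: (B \in D); case: (A \subset B); case: (R \subset ~: B).
under eq_bigr do rewrite E.
rewrite exchange_big /= mulnC -sum_nat_const; apply: eq_bigr => B.
rewrite inE => /andP [BD /andP [AB RB]].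
rewrite -big_mkcondr /= sum1_card -(blk_size BD).
transitivity #|B :\: A|; last by rewrite cardsD (setIidPr AB).
apply: eq_card => x; rewrite unfold_in /= !inE negb_or.
  case xB: (x \in B); rewrite ?andbF ?andbT //.
  have : x \notin R by apply: contraL xB => xR; move/subsetP: RB => /(_ x xR); rewrite inE.
by move=> ->; rewrite andbT.
Qed.

Lemma S_A0 (A : {set 'I_v}) : SS A set0 = [set B : {set 'I_v} | (B \in D) && (A \subset B)].
Proof. by apply/setP => B; rewrite !inE sub0set andbT. Qed.

Lemma exists_out (A : {set 'I_v}) : #|A| < v -> exists x, x \notin A.
Proof.
move=> Hv; have : 0 < #|~: A| by have := cardsC A; rewrite card_ord; lia.
by case/card_gt0P => x; rewrite inE => ?; exists x.
Qed.

Lemma invS0 d : forall A A' : {set 'I_v}, #|A| = #|A'| -> #|A| + d = t ->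
  #|SS A set0| = #|SS A' set0|.
Proof.
case: Hdes => _ Hl.
elim: d => [|d IH] A A' HA Ht.
  by rewrite !S_A0 !Hl //; lia.
have akv : #|A| < k by lia.
have [y0 y0A] : exists y0, y0 \notin A by apply: exists_out; lia.
have Hkey (X : {set 'I_v}) : #|X| = #|A| ->
    (k - #|A|) * #|SS X set0| = (v - #|A|) * #|SS (y0 |: A) set0|.
  move=> HX; have HX0 : X \subset ~: set0 by rewrite setC0 subsetT.
  rewrite -HX -(dcS HX0) setU0.
  rewrite (@sum_const_in _ _ _ #|SS (y0 |: A) set0|).
    by have := cardsC X; rewrite card_ord => HC; congr (_ * _); lia.
  move=> x; rewrite inE => xX; apply: IH.
    by rewrite !cardsU1 xX y0A HX.
  by rewrite cardsU1 xX HX; lia.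
apply/eqP; rewrite -(@eqn_pmul2l (k - #|A|)); last by lia.
by rewrite Hkey // Hkey.
Qed.


End Design.

Section Design2.
Variables (v t k lam : nat) (D : {set {set 'I_v}}).
Hypotheses (Hdes : is_design t k lam D) (tk : t <= k) (kv : k <= v).
Local Notation SS := (SS D).

Lemma subCD1 (A R : {set 'I_v}) y : A \subset ~: R ->
  (A \subset ~: (R :\ y)) && (y |: A \subset ~: (R :\ y)).
Proof.
move=> H; have H1 : A \subset ~: (R :\ y).
  by apply: subset_trans H _; rewrite setCS subD1set.
by rewrite H1 subUset sub1set !inE eqxx H1.
Qed.

Lemma invS r : forall A A' R R' : {set 'I_v}, A \subset ~: R -> A' \subset ~: R' ->
  #|A| = #|A'| -> #|R| = r -> #|R'| = r -> #|A| + r <= t -> #|SS A R| = #|SS A' R'|.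
Proof.
elim: r => [|r IH] A A' R R' HAR HAR' HA HR HR' Ht.
  move/eqP: HR; rewrite cards_eq0 => /eqP ->.
  move/eqP: HR'; rewrite cards_eq0 => /eqP ->.
  by apply: (@invS0 v t k lam D Hdes tk kv (t - #|A|)); lia.
have [y yR] : exists y, y \in R by apply/card_gt0P; rewrite HR.
have [y' yR'] : exists y, y \in R' by apply/card_gt0P; rewrite HR'.
have yA : y \notin A.
  by apply/negP => /(subsetP HAR); rewrite inE yR.
have yA' : y' \notin A'.
  by apply/negP => /(subsetP HAR'); rewrite inE yR'.
have := S_split D y A (R :\ y); rewrite setD1K //.
have := S_split D y' A' (R' :\ y'); rewrite setD1K // => E' E.
have C0 : #|R :\ y| = r by have := cardsD1 y R; rewrite yR HR; lia.
have C0' : #|R' :\ y'| = r by have := cardsD1 y' R'; rewrite yR' HR'; lia.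
case/andP: (subCD1 y HAR) => H1 H2.
case/andP: (subCD1 y' HAR') => H1' H2'.
have I1 : #|SS A (R :\ y)| = #|SS A' (R' :\ y')| by apply: IH => //; lia.
have I2 : #|SS (y |: A) (R :\ y)| = #|SS (y' |: A') (R' :\ y')|.
  apply: IH => //; rewrite ?cardsU1 ?yA ?yA' ?HA //; lia.
by apply/eqP; rewrite -(eqn_add2l #|SS (y |: A) (R :\ y)|) -E I2 -E' I1.
Qed.

Lemma ratioS (A R : {set 'I_v}) x : A \subset ~: R -> #|A| + #|R| < t -> x \notin A :|: R ->
  (v - (#|A| + #|R|)) * #|SS (x |: A) R| = (k - #|A|) * #|SS A R|.
Proof.
move=> AR Ht xAR.
rewrite -(dcS Hdes AR) (@sum_const_in _ _ _ #|SS (x |: A) R|).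
  have := cardsC (A :|: R); rewrite card_ord cardsU.
  have -> : A :&: R = set0.
    apply/setP => z; rewrite !inE; apply/negP => /andP [zA zR].
    by move/subsetP: AR => /(_ z zA); rewrite inE zR.
  by rewrite cards0 => HC; congr (_ * _); lia.
move=> y; rewrite inE !in_setU negb_or => /andP [yA yR].
move: xAR; rewrite !in_setU negb_or => /andP [xA xR].
apply: (invS (r := #|R|)) => //.
- by rewrite subUset sub1set inE yR AR.
- by rewrite subUset sub1set inE xR AR.
- by rewrite !cardsU1 yA xA.
- by rewrite cardsU1 yA; lia.
Qed.

End Design2.


Section Count.
Variables (v t k lam : nat) (D : {set {set 'I_v}}).
Hypotheses (Hdes : is_design t k lam D) (tk : t <= k) (kv : k <= v).

Lemma count_blocks : #|D| * 'C(k, t) = lam * 'C(v, t).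
Proof.
case: Hdes => Hk Hl.
have E1 : \sum_(T in [set T : {set 'I_v} | #|T| == t]) #|[set B in D | T \subset B]|
   = 'C(v, t) * lam.
  rewrite (@sum_const_in _ _ _ lam); first by rewrite card_draws card_ord.
  by move=> T; rewrite inE => /eqP; apply: Hl.
rewrite [RHS]mulnC -E1.
under eq_bigr => T0 _ do rewrite (card_sumb (fun B : {set 'I_v} => (B \in D) && (T0 \subset B))).
rewrite exchange_big /=.
rewrite [RHS](bigID (fun B => B \in D)) /= [X in _ = _ + X]big1; last first.
  by move=> B /negPf BD; apply: big1 => T _; rewrite BD.
rewrite addn0 [RHS](@sum_const_in _ D _ 'C(k, t)) //.
  move=> B BD; rewrite -(Hk B BD) -cards_draws card_sumb big_mkcond /=.
  by apply: eq_bigr => T _; rewrite !inE BD /= andbC; case: (_ == _).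
Qed.

End Count.


Lemma ind_sum (T : finType) (X : {set T}) a : \sum_(y in X) (a == y : nat) = (a \in X).
Proof.
case: (boolP (a \in X)) => aX.
  rewrite (bigD1 a) //= eqxx big1 // => y /andP [_ ya].
  by rewrite eq_sym (negPf ya).
by apply: big1 => y yX; case: eqP => // E; subst; rewrite yX in aX.
Qed.

Lemma sum_lt (T : finType) (P : pred T) (f g : T -> nat) i0 : P i0 ->
  (forall i, P i -> f i <= g i) -> f i0 < g i0 ->
  \sum_(i | P i) f i < \sum_(i | P i) g i.
Proof.
move=> Pi0 H H0; rewrite (bigD1 i0) // [X in _ < X](bigD1 i0) //= -addSn.
by apply: leq_add => //; apply: leq_sum => i /andP [Pi _]; apply: H.
Qed.

Lemma sq_move (T : finType) (f g : T -> nat) x y : x != y ->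
  g x + 1 = f x -> g y = f y + 1 -> (forall z, z != x -> z != y -> g z = f z) ->
  \sum_z (g z)^2 + 2 * f x = \sum_z (f z)^2 + 2 * f y + 2.
Proof.
move=> xy Hx Hy Hz.
rewrite (bigD1 x) // [X in _ = X + _ + _](bigD1 x) //=.
rewrite (bigD1 y) /=; last by rewrite eq_sym.
rewrite [X in _ = _ + X + _ + _](bigD1 y) /=; last by rewrite eq_sym.
rewrite (eq_bigr (fun z => (f z)^2)); last first.
  by move=> z /andP [zx zy]; rewrite Hz.
rewrite Hy -Hx; nia.
Qed.

Section Order.
Variables (b k v c : nat) (bl : 'I_b -> {set 'I_v}).
Hypotheses (Hbl : forall e, #|bl e| = k)
  (Hrep : forall m, \sum_e (m \in bl e : nat) = c * k).

Definition validS (s : 'I_b -> 'I_k -> 'I_v) :=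
  forall e, injective (s e) /\ (forall u, s e u \in bl e).

Definition NN (s : 'I_b -> 'I_k -> 'I_v) u m := \sum_e (s e u == m : nat).

Lemma surjS sg e m : validS sg -> m \in bl e -> exists u, sg e u = m.
Proof.
move=> Hv me; case: (Hv e) => inj sub.
have E : [set sg e u | u : 'I_k] = bl e.
  apply/eqP; rewrite eqEcard card_imset // card_ord Hbl leqnn andbT.
  by apply/subsetP => z /imsetP [u _ ->].
by move: me; rewrite -E => /imsetP [u _ ->]; exists u.
Qed.

Lemma rowsum sg m : validS sg -> \sum_u NN sg u m = c * k.
Proof.
move=> Hv; rewrite -(Hrep m) /NN exchange_big; apply: eq_bigr => e _.
case: (boolP (m \in bl e)) => me.
  case: (surjS Hv me) => u0 E.
  rewrite (bigD1 u0) //= E eqxx big1 // => u /negPf uu0.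
  case: eqP => // E'; rewrite -E' in E.
  by case: (Hv e) => inj _; move/inj: E => E; rewrite E eqxx in uu0.
apply: big1 => u _; case: eqP => // E; rewrite -E in me.
by case: (Hv e) => _ H; rewrite H in me.
Qed.

Lemma over_under (f : 'I_k -> nat) : \sum_u f u = c * k -> (exists u, f u != c) ->
  (exists u, c < f u) /\ (exists u, f u < c).
Proof.
move=> Hs [u0 Hu0].
have Hc : \sum_(u : 'I_k) c = c * k by rewrite sum_nat_const card_ord mulnC.
split.
  case: (boolP [exists u, c < f u]) => [/existsP // | /existsPn H].
  have lt : \sum_u f u < \sum_(u : 'I_k) c.
    apply: (@sum_lt _ xpredT f (fun=> c) u0) => // [i _|]; first by rewrite leqNgt H.
    by have := H u0; rewrite -leqNgt leq_eqVlt (negPf Hu0).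
  by rewrite Hs Hc ltnn in lt.
case: (boolP [exists u, f u < c]) => [/existsP // | /existsPn H].
have lt : \sum_(u : 'I_k) c < \sum_u f u.
  apply: (@sum_lt _ xpredT (fun=> c) f u0) => // [i _|]; first by rewrite leqNgt H.
  by have := H u0; rewrite -leqNgt leq_eqVlt eq_sym (negPf Hu0).
by rewrite Hs Hc ltnn in lt.
Qed.

Definition EE (sg : 'I_b -> 'I_k -> 'I_v) (s s' : 'I_k) : rel 'I_v :=
  fun y z => [exists e, (sg e s == y) && (sg e s' == z)].

Lemma sumX sg u (X : {set 'I_v}) : \sum_(y in X) NN sg u y = \sum_e (sg e u \in X : nat).
Proof. by rewrite /NN exchange_big; apply: eq_bigr => e _; rewrite ind_sum. Qed.

Lemma closure sg s s' x : NN sg s' x < NN sg s x ->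
  exists y, connect (EE sg s s') x y /\ NN sg s y < NN sg s' y.
Proof.
move=> Hx.
set X := [set y | connect (EE sg s s') x y].
case: (boolP [exists y, (y \in X) && (NN sg s y < NN sg s' y)]).
  by case/existsP => y /andP []; rewrite inE => ? ?; exists y.
move/existsPn => H.
have lt : \sum_(y in X) NN sg s' y < \sum_(y in X) NN sg s y.
  apply: (sum_lt (i0 := x)) => //; first by rewrite inE connect0.
  by move=> y yX; have := H y; rewrite yX /= -leqNgt.
have le : \sum_(y in X) NN sg s y <= \sum_(y in X) NN sg s' y.
  rewrite !sumX; apply: leq_sum => e _.
  case: (boolP (sg e s \in X)) => //; rewrite !inE => Hc.
  have -> // : connect (EE sg s s') x (sg e s').
  apply: (connect_trans Hc); apply: connect1; apply/existsP; exists e.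
  by rewrite !eqxx.
by have := leq_trans lt le; rewrite ltnn.
Qed.


Definition swp (sg : 'I_b -> 'I_k -> 'I_v) (s s' : 'I_k) e0 : 'I_b -> 'I_k -> 'I_v :=
  fun e u => if e == e0 then sg e (tperm s s' u) else sg e u.

Lemma swp_valid sg s s' e0 : validS sg -> validS (swp sg s s' e0).
Proof.
move=> Hv e; case: (Hv e) => inj sub; rewrite /swp.
case: (e == e0); split => //.
- by move=> u1 u2 /inj; apply: perm_inj.
Qed.

Lemma swp_N sg s s' e0 u m :
  NN (swp sg s s' e0) u m + (sg e0 u == m) = NN sg u m + (sg e0 (tperm s s' u) == m).
Proof.
rewrite /NN (bigD1 e0) // [X in _ = X + _](bigD1 e0) //= /swp eqxx.
rewrite (eq_bigr (fun e => (sg e u == m : nat))); last first.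
  by move=> e /negPf ->.
lia.
Qed.

Lemma path_swap s s' p : forall x sg, validS sg -> uniq (x :: p) ->
  path (EE sg s s') x p ->
  exists sg', [/\ validS sg',
    (forall m, NN sg' s m + (x == m) = NN sg s m + (last x p == m)),
    (forall m, NN sg' s' m + (last x p == m) = NN sg s' m + (x == m))
  & (forall u m, u != s -> u != s' -> NN sg' u m = NN sg u m)].
Proof.
elim: p => [|x1 p IH] x sg Hv Hu Hp.
  by exists sg; split.
move: Hp => /= /andP [/existsP [e0 /andP [/eqP Hs /eqP Hs']] Hp].
set sg1 := swp sg s s' e0.
have Hv1 : validS sg1 by apply: swp_valid.
have Hp1 : path (EE sg1 s s') x1 p.
  apply: (@sub_in_path _ (predC1 x) (EE sg s s')); last first.
  - exact: Hp.
  - apply/allP => z zin; apply/eqP => zx; subst z.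
    by move: Hu; rewrite /= zin.
  move=> y z yx _ /existsP [e /andP [/eqP ey /eqP ez]].
  apply/existsP; exists e.
  have ne : e != e0 by apply/eqP => E; subst e; move: yx; rewrite -ey Hs inE eqxx.
  by rewrite /sg1 /swp (negPf ne) ey ez !eqxx.
have Hu1 : uniq (x1 :: p) by case/andP: Hu.
case: (IH x1 sg1 Hv1 Hu1 Hp1) => sg' [Hv' Es Es' Eo].
exists sg'; split => //.
- move=> m; have := Es m; have := swp_N sg s s' e0 s m.
  rewrite tpermL Hs Hs' /= -/sg1; lia.
- move=> m; have := Es' m; have := swp_N sg s s' e0 s' m.
  rewrite tpermR Hs Hs' /= -/sg1; lia.
- move=> u m us us'; rewrite Eo //; have := swp_N sg s s' e0 u m.
  by rewrite tpermD 1?eq_sym // -/sg1; lia.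
Qed.

Definition Phi sg := \sum_(u : 'I_k) \sum_(m : 'I_v) (NN sg u m)^2.

Lemma improve sg : validS sg -> (exists u m, NN sg u m != c) ->
  exists sg', validS sg' /\ Phi sg' < Phi sg.
Proof.
move=> Hv [u0 [x Hu0]].
case: (over_under (rowsum x Hv)) => [|[s Hs] [s' Hs']]; first by exists u0.
have Hx : NN sg s' x < NN sg s x by lia.
have ss' : s != s' by apply/eqP => E; subst; lia.
case: (closure Hx) => y [/connectP [p Hp Hy] Hlt].
have yx : x != y by apply/eqP => E; rewrite -E in Hlt; lia.
subst y; move: Hlt yx; case: (shortenP Hp) => p' Hp' Hu' _ Hlt yx.
case: (path_swap Hv Hu' Hp') => sg' [Hv' Es Es' Eo].
exists sg'; split => //.
set y := last x p' in Es Es' Hlt yx *.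
have R1 := @sq_move _ (NN sg s) (NN sg' s) x y yx.
have R2 := @sq_move _ (NN sg s') (NN sg' s') y x.
rewrite eq_sym in R2; have {R2} R2 := R2 yx.
have {R1} R1 : \sum_(z : 'I_v) (NN sg' s z)^2 + 2 * NN sg s x =
               \sum_(z : 'I_v) (NN sg s z)^2 + 2 * NN sg s y + 2.
  apply: R1.
  - by have := Es x; rewrite eqxx [y == x]eq_sym (negPf yx); lia.
  - by have := Es y; rewrite eqxx (negPf yx); lia.
  - by move=> z zx zy; have := Es z; rewrite [x == z]eq_sym (negPf zx) [y == z]eq_sym (negPf zy); lia.
have {R2} R2 : \sum_(z : 'I_v) (NN sg' s' z)^2 + 2 * NN sg s' y =
               \sum_(z : 'I_v) (NN sg s' z)^2 + 2 * NN sg s' x + 2.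
  apply: R2.
  - by have := Es' y; rewrite eqxx (negPf yx); lia.
  - by have := Es' x; rewrite eqxx [y == x]eq_sym (negPf yx); lia.
  - by move=> z zy zx; have := Es' z; rewrite [x == z]eq_sym (negPf zx) [y == z]eq_sym (negPf zy); lia.
rewrite /Phi (bigD1 s) // [X in _ < X](bigD1 s) //=.
rewrite (bigD1 s') /=; last by rewrite eq_sym.
rewrite [X in _ < _ + X](bigD1 s') /=; last by rewrite eq_sym.
rewrite (eq_bigr (fun u => \sum_(m : 'I_v) (NN sg u m)^2)); last first.
  by move=> u /andP [us us']; apply: eq_bigr => m _; rewrite Eo.
move: R1 R2.
set A1 := \sum_(z : 'I_v) (NN sg' s z)^2.
set A2 := \sum_(z : 'I_v) (NN sg' s' z)^2.
set A3 := \sum_(z : 'I_v) (NN sg s z)^2.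
set A4 := \sum_(z : 'I_v) (NN sg s' z)^2.
set A5 := \sum_(i < k | _) _.
move: Hs Hs' Hlt.
set n1 := NN sg s x. set n2 := NN sg s' x. set n3 := NN sg s y. set n4 := NN sg s' y.
lia.
Qed.

Lemma balance_from sg : validS sg -> exists sg', validS sg' /\ forall u m, NN sg' u m = c.
Proof.
suff H : forall n sg, Phi sg < n -> validS sg ->
  exists sg', validS sg' /\ forall u m, NN sg' u m = c.
  by move=> Hv; apply: (H (Phi sg).+1).
elim => [|n IH] sg0 Hn Hv //.
case: (boolP [exists u, exists m, NN sg0 u m != c]).
  case/existsP => u /existsP [m Hm].
  case: (improve Hv) => [|sg' [Hv' Hlt]]; first by exists u, m.
  by apply: (IH sg') => //; apply: leq_trans Hlt _.
move/existsPn => H; exists sg0; split => // u m; apply/eqP.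
by have := H u; move/existsPn => /(_ m); rewrite negbK.
Qed.


Lemma balance : exists sg, validS sg /\ forall u m, NN sg u m = c.
Proof.
pose sg0 : 'I_b -> 'I_k -> 'I_v := fun e u => enum_val (cast_ord (esym (Hbl e)) u).
apply: (@balance_from sg0) => e; split.
  by move=> u1 u2 /enum_val_inj /cast_ord_inj.
by move=> u; rewrite /sg0; apply: enum_valP.
Qed.

End Order.


Fixpoint hc (v : nat) (st : strategy v) (B : {set 'I_v}) j : seq bool :=
  match j with
  | 0 => [::]
  | j'.+1 => (st [::] \in B) :: hc (fun h => st ((st [::] \in B) :: h)) B j'
  end.

Fixpoint qc (v : nat) (st : strategy v) (B : {set 'I_v}) j : seq 'I_v :=
  match j with
  | 0 => [::]
  | j'.+1 => st [::] :: qc (fun h => st ((st [::] \in B) :: h)) B j'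
  end.

Definition oc (v : nat) (st : strategy v) (B : {set 'I_v}) j := st (hc st B j).

Lemma hc_rcons v (st : strategy v) B j :
  hc st B j.+1 = rcons (hc st B j) (st (hc st B j) \in B).
Proof.
elim: j st => [|j IH] st //.
transitivity ((st [::] \in B) :: hc (fun h => st ((st [::] \in B) :: h)) B j.+1); first by [].
by rewrite IH.
Qed.

Lemma hist_hc k v b (enc : 'I_b -> 'I_k -> 'I_v) st e j :
  hist enc st e j = hc st (valid_msgs enc e) j.
Proof. by elim: j => [|j IH] //; rewrite hc_rcons -IH. Qed.

Lemma map_hc v (st : strategy v) B i :
  [seq st (hc st B j) | j <- iota 0 i] = qc st B i.
Proof.
elim: i st => [|i IH] st //=; congr (_ :: _).
by rewrite -(IH (fun h => st ((st [::] \in B) :: h))) -(addn0 1) iotaDl -map_comp.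
Qed.

Lemma queries_qc k v b (enc : 'I_b -> 'I_k -> 'I_v) st i e :
  queries enc st i e = qc st (valid_msgs enc e) i.
Proof.
by rewrite /queries -map_hc; apply: eq_map => j; rewrite hist_hc.
Qed.

Lemma output_oc k v b (enc : 'I_b -> 'I_k -> 'I_v) st i e :
  output enc st i e = oc st (valid_msgs enc e) i.
Proof. by rewrite /output hist_hc. Qed.

Lemma ar n c u1 u2 s1 s2 : 0 < n -> n * u1 = c * s1 -> n * u2 = c.+1 * s2 -> n.+1 * s1 = c.+1 * (s1 + s2) ->
  n.+1 * (u1 + u2) = c.+1 * (s1 + s2).
Proof.
move=> n0 H1 H2 H3.
apply/eqP; rewrite -(@eqn_pmul2l n) //; apply/eqP.
have E : n * (n.+1 * (u1 + u2)) = n.+1 * (n * u1) + n.+1 * (n * u2) by ring.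
rewrite E H1 H2.
have E2 : n.+1 * (c * s1) = c * (n.+1 * s1) by ring.
rewrite E2 H3. 
have E3 : n * (c.+1 * (s1 + s2)) = c.+1 * (n * s1) + n * c.+1 * s2 by ring.
have H4 : n * s1 = c * (s1 + s2) + s2 by move: H3; rewrite mulSn; lia.
rewrite E3 H4; ring.
Qed.

Section Key.
Variables (v t k lam : nat) (D : {set {set 'I_v}}).
Hypotheses (Hdes : is_design t k lam D) (tk : t <= k) (kv : k <= v).
Local Notation SS := (SS D).

Lemma SS1 x (A R : {set 'I_v}) B : (B \in SS (x |: A) R) = (B \in SS A R) && (x \in B).
Proof.
rewrite !inE subUset sub1set.
by case: (x \in B); case: (B \in D); case: (A \subset B); case: (R \subset ~: B).
Qed.

Lemma SS2 x (A R : {set 'I_v}) B : (B \in SS A (x |: R)) = (B \in SS A R) && (x \notin B).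
Proof.
rewrite !inE subUset sub1set !inE.
by case: (x \in B); case: (B \in D); case: (A \subset B); case: (R \subset ~: B).
Qed.

Lemma key i : forall (st : strategy v) (A R : {set 'I_v}), A \subset ~: R ->
  #|A| + #|R| + i < t ->
  (forall B, B \in SS A R -> (oc st B i \notin A :|: R) && (oc st B i \notin qc st B i)) ->
  (v - (#|A| + #|R|)) * #|[set B in SS A R | oc st B i \in B]| = (k - #|A|) * #|SS A R|.
Proof.
elim: i => [|i IH] st A R AR Ht Hval.
  set x := st [::].
  case: (set_0Vmem (SS A R)) => [-> | [B0 B0S]].
    rewrite cards0 muln0; apply/eqP; rewrite muln_eq0; apply/orP; right.
    by rewrite cards_eq0; apply/eqP/setP => B; rewrite !inE.
  have xAR : x \notin A :|: R by case/andP: (Hval B0 B0S).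
  have -> : [set B in SS A R | oc st B 0 \in B] = SS (x |: A) R.
    by apply/setP => B; rewrite !inE subUset sub1set /oc /=; 
       case: (x \in B); case: (B \in D); case: (A \subset B); case: (R \subset ~: B).
  by apply: (ratioS Hdes tk kv AR) => //; lia.
set x := st [::].
set stT : strategy v := fun h => st (true :: h).
set stF : strategy v := fun h => st (false :: h).
have ocT (B : {set 'I_v}) : x \in B -> oc st B i.+1 = oc stT B i.
  by move=> xB; rewrite /oc /= -/x xB.
have qcT (B : {set 'I_v}) : x \in B -> qc st B i.+1 = x :: qc stT B i.
  by move=> xB; rewrite /= -/x xB.
have ocF (B : {set 'I_v}) : x \notin B -> oc st B i.+1 = oc stF B i.
  by move=> /negPf xB; rewrite /oc /= -/x xB.
have qcF (B : {set 'I_v}) : x \notin B -> qc st B i.+1 = x :: qc stF B i.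
  by move=> /negPf xB; rewrite /= -/x xB.
have valT (A' R' B : {set 'I_v}) : B \in SS A R -> x \in B -> A' \subset x |: A -> R' \subset R ->
    (oc stT B i \notin A' :|: R') && (oc stT B i \notin qc stT B i).
  move=> BS xB sA sR; move: (Hval B BS); rewrite ocT // qcT //.
  set y := oc stT B i; rewrite !in_setU in_cons => /andP [H1 H2].
  move: H2; rewrite negb_or => /andP [H2 ->]; rewrite andbT negb_or.
  move: H1; rewrite negb_or => /andP [H1 H3].
  apply/andP; split; apply/negP.
    move/(subsetP sA); rewrite in_setU1 => /orP [/eqP E|]; first by rewrite E eqxx in H2.
    by apply/negP.
  by move/(subsetP sR); apply/negP.
have valF (A' R' B : {set 'I_v}) : B \in SS A R -> x \notin B -> A' \subset A -> R' \subset x |: R ->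
    (oc stF B i \notin A' :|: R') && (oc stF B i \notin qc stF B i).
  move=> BS xB sA sR; move: (Hval B BS); rewrite ocF // qcF //.
  set y := oc stF B i; rewrite !in_setU in_cons => /andP [H1 H2].
  move: H2; rewrite negb_or => /andP [H2 ->]; rewrite andbT negb_or.
  move: H1; rewrite negb_or => /andP [H1 H3].
  apply/andP; split; apply/negP.
    by move/(subsetP sA); apply/negP.
  move/(subsetP sR); rewrite in_setU1 => /orP [/eqP E|]; first by rewrite E eqxx in H2.
  by apply/negP.
have subU (X : {set 'I_v}) : X \subset x |: X by apply/subsetP => z zX; rewrite in_setU1 zX orbT.
case: (boolP (x \in A)) => xA.
  have xB (B : {set 'I_v}) : B \in SS A R -> x \in B.
    by rewrite inE => /andP [_ /andP [/subsetP H _]]; apply: H.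
  have -> : [set B in SS A R | oc st B i.+1 \in B] = [set B in SS A R | oc stT B i \in B].
    apply/setP => B; rewrite !inE; case BS : [&& B \in D, A \subset B & R \subset ~: B] => //=.
    by rewrite ocT //; apply: xB; rewrite inE BS.
  apply: IH => //; first by lia.
  by move=> B BS; apply: valT; rewrite ?subxx ?subU //; apply: xB.
case: (boolP (x \in R)) => xR.
  have xB (B : {set 'I_v}) : B \in SS A R -> x \notin B.
    rewrite inE => /andP [_ /andP [_ /subsetP H]].
    by move: (H x xR); rewrite inE.
  have -> : [set B in SS A R | oc st B i.+1 \in B] = [set B in SS A R | oc stF B i \in B].
    apply/setP => B; rewrite !inE; case BS : [&& B \in D, A \subset B & R \subset ~: B] => //=.
    by rewrite ocF //; apply: xB; rewrite inE BS.
  apply: IH => //; first by lia.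
  by move=> B BS; apply: valF; rewrite ?subxx ?subU //; apply: xB.
have xAR : x \notin A :|: R by rewrite in_setU negb_or xA xR.
have Hs := S_split D x A R.
have Hr := ratioS Hdes tk kv AR (x := x).
have AR1 : x |: A \subset ~: R by rewrite subUset sub1set inE xR AR.
have AR2 : A \subset ~: (x |: R).
  apply/subsetP => z zA; rewrite !inE negb_or; apply/andP; split.
    by apply/eqP => E; subst z; rewrite zA in xA.
  by move/subsetP: AR => /(_ z zA); rewrite inE.
have I1 := IH stT (x |: A) R AR1.
have I2 := IH stF A (x |: R) AR2.
rewrite !cardsU1 xA xR /= in I1 I2.
have H1t : 1 + #|A| + #|R| + i < t by lia.
have H2t : #|A| + (1 + #|R|) + i < t by lia.
have {I1} I1 := I1 H1t.
have {I2} I2 := I2 H2t.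
have Esucc : #|[set B in SS A R | oc st B i.+1 \in B]| =
   #|[set B in SS (x |: A) R | oc stT B i \in B]| + #|[set B in SS A (x |: R) | oc stF B i \in B]|.
  rewrite -(cardsID [set B : {set 'I_v} | x \in B] [set B in SS A R | oc st B i.+1 \in B]).
  have memSS (X : {set {set 'I_v}}) (P : pred {set 'I_v}) B :
    (B \in [set B0 in X | P B0]) = (B \in X) && P B by rewrite inE.
  have memX B : (B \in [set B0 : {set 'I_v} | x \in B0]) = (x \in B) by rewrite inE.
  have -> : [set B in SS A R | oc st B i.+1 \in B] :&: [set B : {set 'I_v} | x \in B]
      = [set B in SS (x |: A) R | oc stT B i \in B].
    apply/setP => B; rewrite in_setI memX [in LHS]memSS [in RHS]memSS SS1.
    case BS : (B \in SS A R) => //=; case xB: (x \in B) => //=; last by rewrite andbF.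
    by rewrite andbT ocT.
  have -> : [set B in SS A R | oc st B i.+1 \in B] :\: [set B : {set 'I_v} | x \in B]
      = [set B in SS A (x |: R) | oc stF B i \in B].
    apply/setP => B; rewrite in_setD memX [in LHS]memSS [in RHS]memSS SS2.
    case BS : (B \in SS A R) => //=; case xB: (x \in B) => //=.
    by rewrite ocF ?xB.
  by [].
have {I1} I1 := I1 (fun B BS => valT _ _ B
   (ltac:(by move: BS; rewrite SS1 => /andP []))
   (ltac:(by move: BS; rewrite SS1 => /andP []))
   (subxx _) (subxx _)).
have {I2} I2 := I2 (fun B BS => valF _ _ B
   (ltac:(by move: BS; rewrite SS2 => /andP []))
   (ltac:(by move: BS; rewrite SS2 => /andP []))
   (subxx _) (subxx _)).
rewrite Esucc Hs; rewrite Hs in Hr; have Ht0 : #|A| + #|R| < t by lia.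
have {Hr} Hr := Hr Ht0 xAR.
move: I1 I2 Hr.
move: #|[set B in SS (x |: A) R | oc stT B i \in B]| => u1.
move: #|[set B in SS A (x |: R) | oc stF B i \in B]| => u2.
move: #|SS (x |: A) R| => s1.
move: #|SS A (x |: R)| => s2.
have Hn : v - (#|A| + #|R|) = (v - (#|A| + #|R|)).-1.+1 by lia.
have Hc : k - #|A| = (k - #|A|).-1.+1 by lia.
have Hn1 : v - (1 + #|A| + #|R|) = (v - (#|A| + #|R|)).-1 by lia.
have Hn2 : v - (#|A| + (1 + #|R|)) = (v - (#|A| + #|R|)).-1 by lia.
have Hc1 : k - (1 + #|A|) = (k - #|A|).-1 by lia.
have Hp : 0 < (v - (#|A| + #|R|)).-1 by lia.
rewrite Hn1 Hn2 Hc1 Hn Hc => I1 I2 Hr.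
by apply: ar.
Qed.

End Key.

Import GRing.Theory Num.Theory.


Theorem mainTheorem5 (t k v lam : nat) (D : {set {set 'I_v}}) :
  (1 <= t)%N -> (t <= k)%N -> (k <= v)%N -> (1 <= lam)%N ->
  is_design t k lam D -> (v %| #|D|)%N ->
  exists enc : 'I_#|D| -> 'I_k -> 'I_v,
    [/\ auth_system enc,
        perfect_secrecy enc (@unif #|D|) (@unif k),
        fold_secure enc (@unif #|D|) t.-1
      & (optimal enc t <-> lam = 1%N)].
Proof.
move=> t1 tk kv lam1 Hdes vD.
have Hcount := count_blocks Hdes.
have v0 : 0 < v by lia.
have [m0 _] : exists m0 : 'I_v, true by exists (Ordinal v0).
have HSD : SS D set0 set0 = D.
  by apply/setP => B; rewrite !inE !sub0set andbT andbT.
have Hrep0 (m : 'I_v) : v * #|SS D [set m] set0| = k * #|D|.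
  have H0 : (set0 : {set 'I_v}) \subset ~: set0 by rewrite sub0set.
  have := dcS Hdes H0; rewrite setU0 setC0 HSD cards0 subn0 => <-.
  rewrite (@sum_const_in _ _ _ #|SS D [set m] set0|).
    by rewrite cardsT card_ord.
  move=> x _; rewrite setU0; apply: (invS Hdes tk kv (r := 0));
    by rewrite ?setC0 ?subsetT ?cards1 ?cards0 ?addn0.
pose bl (e : 'I_#|D|) : {set 'I_v} := enum_val e.
have blD e : bl e \in D by apply: enum_valP.
have Hbl e : #|bl e| = k by apply: (blk_size Hdes); apply: blD.
have sumbl (F : {set 'I_v} -> nat) : \sum_e F (bl e) = \sum_(B in D) F B.
  by rewrite [RHS]big_enum_val.
have b0 : (0 < #|D|)%N.
  have : (0 < lam * 'C(v, t))%N by rewrite muln_gt0 bin_gt0; lia.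
  by rewrite -Hcount muln_gt0 => /andP [].
set c := (#|D| %/ v)%N.
have Hb : #|D| = (c * v)%N by rewrite divnK.
have c0 : (0 < c)%N by move: b0; rewrite Hb muln_gt0 => /andP [].
have Hrep m : \sum_e (m \in bl e : nat) = (c * k)%N.
  rewrite (sumbl (fun B => (m \in B : nat))).
  have -> : \sum_(B in D) (m \in B : nat) = #|SS D [set m] set0|.
    rewrite /SS card_sumb big_mkcond /=; apply: eq_bigr => B _.
    by rewrite sub1set sub0set andbT; case: (B \in D).
  apply/eqP; rewrite -(eqn_pmul2l v0) Hrep0 Hb; apply/eqP; ring.
have [sg [Hv HN]] := balance Hbl Hrep.
have img e : valid_msgs sg e = bl e.
  case: (Hv e) => inj sub.
  apply/eqP; rewrite eqEcard card_imset // card_ord Hbl leqnn andbT.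
  by apply/subsetP => z /imsetP [u _ ->].
have Hsum (P : pred 'I_#|D|) (X : rat) :
    (\sum_(e | P e) X = (\sum_e (P e : nat))%:R * X)%R.
  rewrite natr_sum mulr_suml [LHS]big_mkcond /=; apply: eq_bigr => e _.
  by case: (P e); rewrite ?mul1r ?mul0r.
have k0 : (k%:R : rat)%R != 0%R by rewrite pnatr_eq0; lia.
have D0 : (#|D|%:R : rat)%R != 0%R by rewrite pnatr_eq0; lia.
have cc0 : (c%:R : rat)%R != 0%R by rewrite pnatr_eq0; lia.
have vv0 : (v%:R : rat)%R != 0%R by rewrite pnatr_eq0; lia.
exists sg; split.
- split; first by move=> e; case: (Hv e).
  move=> e1 e2 H; apply: enum_val_inj.
  by rewrite -[enum_val e1]/(bl e1) -[enum_val e2]/(bl e2) -!img /valid_msgs (eq_imset _ H).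
- move=> s m _.
  have E s' : pSM sg (@unif #|D|) (@unif k) s' m = (c%:R * (#|D|%:R^-1 * k%:R^-1))%R.
    by rewrite /pSM /unif Hsum -(HN s' m).
  rewrite /pM (eq_bigr (fun=> (c%:R * (#|D|%:R^-1 * k%:R^-1))%R)) //.
  rewrite sumr_const card_ord E /unif -mulr_natr.
  by field; rewrite k0 D0 cc0.
- have Hsucc st : valid_offline sg st t.-1 ->
      succ_offline sg (@unif #|D|) st t.-1 = (k%:R / v%:R)%R.
    move=> Hst; rewrite /succ_offline /unif Hsum.
    have Eu : \sum_e (output sg st t.-1 e \in valid_msgs sg e : nat) =
        #|[set B in SS D set0 set0 | oc st B t.-1 \in B]|.
      under eq_bigr do rewrite output_oc img.
      rewrite (sumbl (fun B => (oc st B t.-1 \in B : nat))) HSD.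
      rewrite (card_sumb (fun B => (B \in D) && (oc st B t.-1 \in B))) big_mkcond /=.
      by apply: eq_bigr => B _; case: (B \in D).
    have H0 : (set0 : {set 'I_v}) \subset ~: set0 by rewrite sub0set.
    have Ht : (#|(set0 : {set 'I_v})| + #|(set0 : {set 'I_v})| + t.-1 < t)%N.
      by rewrite cards0; lia.
    have Hval : forall B, B \in SS D set0 set0 ->
        (oc st B t.-1 \notin set0 :|: set0) && (oc st B t.-1 \notin qc st B t.-1).
      move=> B; rewrite HSD => BD; rewrite setU0 inE /=.
      have Be : bl (enum_rank_in BD B) = B by rewrite /bl enum_rankK_in.
      by have := Hst (enum_rank_in BD B); rewrite output_oc queries_qc img Be.
    have K := key Hdes tk kv H0 Ht Hval.
    rewrite cards0 addn0 !subn0 [in X in _ = _ * X]HSD in K.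
    rewrite Eu; move: K.
    set u := #|[set B in SS D set0 set0 | oc st B t.-1 \in B]| => K.
    have Ku : (u%:R : rat)%R = ((k * #|D|)%:R / v%:R)%R.
      by rewrite -K natrM; field.
    by rewrite Ku natrM; field; rewrite D0 vv0.
  split; last by move=> st Hst; rewrite Hsucc.
  pose st0 : strategy v := fun h => insubd m0 (size h).
  have size_hist e j : size (hist sg st0 e j) = j.
    by elim: j => //= j IH; rewrite size_rcons IH.
  have Vst0 : valid_offline sg st0 t.-1.
    move=> e; rewrite /output /queries {1}/st0 size_hist.
    apply/mapP => [[j]]; rewrite mem_iota add0n => /andP [_ ji].
    rewrite /st0 !size_hist => /(congr1 val); rewrite !val_insubd.
    have tv : (t.-1 < v)%N by lia.
    have jv : (j < v)%N by lia.
    by rewrite tv jv => E; rewrite E ltnn in ji.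
  by exists st0 => //; apply: Hsucc.
- have C0 : ('C(k, t)%:R : rat)%R != 0%R by rewrite pnatr_eq0 -lt0n bin_gt0.
  have Cv : (0 < 'C(v, t))%N by rewrite bin_gt0; lia.
  rewrite /optimal; split.
    move=> H.
    have : (#|D| * 'C(k, t) == 'C(v, t))%N by rewrite -(eqr_nat rat) natrM H divfK.
    by rewrite Hcount => /eqP; nia.
  move=> E; subst lam; apply: (mulIf C0).
  by rewrite divfK // -natrM Hcount mul1n.
Qed.
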